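(* Let $(\mathcal A,(p_n))$ be a Fréchet algebra and $I$ a closed ideal of $\mathcal A$. Then $\mathcal A$ has a bounded approximate diagonal modulo $I$ if and only if there exists a bounded set $B\subseteq\frac{\mathcal A}{I}\widehat\otimes\frac{\mathcal A}{I}$ such that for each finite set $F\subseteq\mathcal A\setminus I$, each $n\in\mathbb N$ and each $\varepsilon>0$ there exists $M\in B$ with $\hat r_n(a\cdot M-M\cdot a)<\varepsilon$ for all $a\in F$ and $\hat p_n(a\cdot\pi_{\mathcal A/I}(M)-\tilde a)<\varepsilon$ for all $a\in\mathcal A$, where $\tilde a=a+I$.
   Context: A Fréchet algebra $(\mathcal A,(p_n))$ is a complete Hausdorff topological algebra whose topology is given by an increasing sequence of submultiplicative seminorms $p_n$. For a closed ideal $I$, $\mathcal A/I$ is a Fréchet algebra with seminorms $\hat p_n(a+I)=\inf\{p_n(a+b):b\in I\}$. $\frac{\mathcal A}{I}\widehat\otimes\frac{\mathcal A}{I}$ is the completed projective tensor product with seminorms $\hat r_n(M)=\inf\{\sum_i\hat p_n(x_i)\hat p_n(y_i):M=\sum_i x_i\otimes y_i\}$, an $\mathcal A$-bimodule via $a\cdot((b+I)\otimes(c+I))=(ab+I)\otimes(c+I)$, $((b+I)\otimes(c+I))\cdot a=(b+I)\otimes(ca+I)$; $\mathcal A$ acts on $\mathcal A/I$ by $a\cdot(b+I)=ab+I$; $\pi_{\mathcal A/I}$ is the continuous linear map $(b+I)\otimes(c+I)\mapsto bc+I$. A set is bounded if each $\hat r_n$ is bounded on it. $\mathcal A$ has a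 bounded approximate diagonal modulo $I$ if there is a bounded net $(m_\alpha)$ in $\frac{\mathcal A}{I}\widehat\otimes\frac{\mathcal A}{I}$ with $a\cdot\pi_{\mathcal A/I}(m_\alpha)-\tilde a\to0$ for all $a\in\mathcal A$ and $a\cdot m_\alpha-m_\alpha\cdot a\to0$ for all $a\in\mathcal A\setminus I$. *)

(* Defs.v *)
From HB Require Import structures.
From mathcomp Require Import all_boot all_order all_algebra.
From mathcomp Require Import complex.
From mathcomp Require Import boolp classical_sets cardinality reals.

Set Implicit Arguments.
Unset Strict Implicit.
Unset Printing Implicit Defensive.

Import Order.TTheory GRing.Theory Num.Theory.
Local Open Scope ring_scope.
Local Open Scope classical_set_scope.

(* Scalar field: the complex numbers R[i] over a real field R : realType.
   |z| is the modulus, a nonnegative real. *)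
Definition cmod (R : realType) (z : R[i]) : R := complex.Re `|z|.

Section FrechetAlgebra.
Variables (R : realType) (A : lmodType R[i]).

Definition is_algebra_mul (mul : A -> A -> A) : Prop :=
  [/\ (forall x y z, mul (mul x y) z = mul x (mul y z)),
      (forall x y z, mul (x + y) z = mul x z + mul y z),
      (forall x y z, mul x (y + z) = mul x y + mul x z),
      (forall (l : R[i]) x y, mul (l *: x) y = l *: mul x y) &
      (forall (l : R[i]) x y, mul x (l *: y) = l *: mul x y)].

Definition is_seminorm (q : A -> R) : Prop :=
  [/\ (forall x, 0 <= q x),
      (forall x y, q (x + y) <= q x + q y) &
      (forall (l : R[i]) x, q (l *: x) = cmod l * q x)].

Definition seq_converges (p : nat -> A -> R) (u : nat -> A) (x : A) : Prop :=
  forall n (eps : R), 0 < eps ->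
    exists N, forall k, (N <= k)%N -> p n (u k - x) < eps.

Definition seq_cauchy (p : nat -> A -> R) (u : nat -> A) : Prop :=
  forall n (eps : R), 0 < eps ->
    exists N, forall k l, (N <= k)%N -> (N <= l)%N -> p n (u k - u l) < eps.

Definition frechet_algebra (mul : A -> A -> A) (p : nat -> A -> R) : Prop :=
  [/\ is_algebra_mul mul /\ (forall n, is_seminorm (p n)),
      (forall n x y, p n (mul x y) <= p n x * p n y),
      (forall n x, p n x <= p n.+1 x),
      (forall x, (forall n, p n x = 0) -> x = 0) &
      (forall u, seq_cauchy p u -> exists x, seq_converges p u x)].

Definition closed_ideal (mul : A -> A -> A) (p : nat -> A -> R) (I : set A) :
  Prop :=
  [/\ I 0,
      (forall x y, I x -> I y -> I (x + y)),
      (forall (l : R[i]) x, I x -> I (l *: x)),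
      (forall a x, I x -> I (mul a x) /\ I (mul x a)) &
      (forall u x, (forall k, I (u k)) -> seq_converges p u x -> I x)].

Variables (mul : A -> A -> A) (p : nat -> A -> R) (I : set A).

(** ** The quotient A/I.  An element b + I of A/I is represented by b : A. *)

Definition qsn (n : nat) (b : A) : R := inf [set p n (b + c) | c in I].

(** Every element of E \hat\otimes_pi F (E, F Fréchet) is the sum of a series
   M = \sum_i x_i \otimes y_i with \sum_i \hat p_n(x_i) \hat p_n(y_i) < oo
   for every n; two such series define the same element iff every
   continuous bilinear form on A/I x A/I takes the same value on them
   (Hahn-Banach: the dual of E \hat\otimes_pi F is the space of continuous
   bilinear forms).  A series is given by its terms
   S : nat -> A * A, S i = (x_i, y_i) (representatives in A of elements of
   A/I). *)

Definition tterm (n : nat) (S : nat -> A * A) (i : nat) : R :=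
  qsn n (S i).1 * qsn n (S i).2.

Definition tsummable (S : nat -> A * A) : Prop :=
  forall n, exists C : R, forall N, \sum_(i < N) tterm n S i <= C.

Definition tsum (n : nat) (S : nat -> A * A) : R :=
  sup [set \sum_(i < N) tterm n S i | N in [set: nat]].

(* continuous bilinear forms on A/I x A/I (viewed as forms on A x A
   vanishing when one argument lies in I) *)
Definition cont_bilinear_Q (phi : A -> A -> R[i]) : Prop :=
  [/\ (forall x y z, phi (x + y) z = phi x z + phi y z) /\
      (forall x y z, phi x (y + z) = phi x y + phi x z),
      (forall (l : R[i]) x y, phi (l *: x) y = l * phi x y),
      (forall (l : R[i]) x y, phi x (l *: y) = l * phi x y),
      (forall x y, I x \/ I y -> phi x y = 0) &
      (exists n (C : R), forall x y,
          cmod (phi x y) <= C * qsn n x * qsn n y)].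

Definition tequiv (S T : nat -> A * A) : Prop :=
  forall phi, cont_bilinear_Q phi ->
    forall eps : R, 0 < eps -> exists N0, forall N, (N0 <= N)%N ->
      cmod (\sum_(i < N) phi (S i).1 (S i).2 -
            \sum_(i < N) phi (T i).1 (T i).2) < eps.

Definition rhat (n : nat) (S : nat -> A * A) : R :=
  inf [set tsum n T | T in [set T | tsummable T /\ tequiv T S]].

Definition lact (a : A) (S : nat -> A * A) : nat -> A * A :=
  fun i => (mul a (S i).1, (S i).2).
Definition ract (S : nat -> A * A) (a : A) : nat -> A * A :=
  fun i => ((S i).1, mul (S i).2 a).
(* S - T : the series S_0, -T_0, S_1, -T_1, ... *)
Definition tsub (S T : nat -> A * A) : nat -> A * A :=
  fun i => if odd i then (- (T i./2).1, (T i./2).2) else S i./2.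

(* c + I = \pi_{A/I}(M), i.e. \sum_i x_i y_i + I converges to c + I in A/I *)
Definition is_piQ (S : nat -> A * A) (c : A) : Prop :=
  forall n (eps : R), 0 < eps -> exists N0, forall N, (N0 <= N)%N ->
    qsn n (\sum_(i < N) mul (S i).1 (S i).2 - c) < eps.

Definition tbounded (B : set (nat -> A * A)) : Prop :=
  (forall S, B S -> tsummable S) /\
  (forall n, exists C : R, forall S, B S -> rhat n S <= C).

Definition directed_set (D : Type) (le : D -> D -> Prop) : Prop :=
  [/\ inhabited D, (forall x, le x x),
      (forall x y z, le x y -> le y z -> le x z) &
      (forall x y, exists z, le x z /\ le y z)].

Definition bounded_approximate_diagonal_mod : Prop :=
  exists (D : Type) (le : D -> D -> Prop) (m : D -> nat -> A * A),
    [/\ directed_set le,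
        tbounded (range m),
        (forall a n (eps : R), 0 < eps -> exists al0, forall al, le al0 al ->
           forall c, is_piQ (m al) c -> qsn n (mul a c - a) < eps) &
        (forall a, ~ I a -> forall n (eps : R), 0 < eps ->
           exists al0, forall al, le al0 al ->
             rhat n (tsub (lact a (m al)) (ract (m al) a)) < eps)].

End FrechetAlgebra.

(* Main.v *)
Require Import Defs.
From HB Require Import structures.
From mathcomp Require Import all_boot all_order all_algebra.
From mathcomp Require Import complex.
From mathcomp Require Import boolp classical_sets cardinality reals.
Import Order.TTheory GRing.Theory Num.Theory.
Local Open Scope ring_scope.
Local Open Scope classical_set_scope.

Set Implicit Arguments. Unset Strict Implicit.
Section Aux.
Variables (R : realType) (A : lmodType R[i]) (mul : A -> A -> A) (p : nat -> A -> R) (I : set A).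
Hypothesis (HA : frechet_algebra mul p) (HI : closed_ideal mul p I).

Lemma p_ge0 n x : 0 <= p n x.
Proof. by case: HA => -[_ /(_ n) [? _ _]]. Qed.

Lemma p_mono n m x : (n <= m)%N -> p n x <= p m x.
Proof.
case: HA => _ _ Hinc _ _.
elim: m => [|m IH]; first by rewrite leqn0 => /eqP ->.
rewrite leq_eqVlt => /orP[/eqP -> //|]; rewrite ltnS => /IH h.
exact: le_trans h (Hinc _ _).
Qed.

Lemma p0 n : p n 0 = 0.
Proof.
case: HA => -[_ /(_ n) [_ _ hs]] _ _ _ _.
have := hs 0 0; rewrite scale0r => ->.
by rewrite /cmod normr0 mul0r.
Qed.

Lemma qsn_ge0 n b : 0 <= qsn p I n b.
Proof.
case: HI => I0 _ _ _ _.
apply: lb_le_inf; first by exists (p n (b + 0)), 0.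
by move=> _ [c _ <-]; exact: p_ge0.
Qed.

Lemma qsn_hlb n b : has_lbound [set p n (b + c) | c in I].
Proof. by exists 0 => _ [c _ <-]; exact: p_ge0. Qed.

Lemma qsn_mono n m b : (n <= m)%N -> qsn p I n b <= qsn p I m b.
Proof.
move=> nm; case: HI => I0 _ _ _ _.
apply: lb_le_inf; first by exists (p m (b + 0)), 0.
move=> _ [c Ic <-]; idtac.
apply: (le_trans _ (@p_mono n m (b + c) nm)).
by apply: ge_inf; [exact: qsn_hlb | exists c].
Qed.

Lemma qsn_I n b : I b -> qsn p I n b <= 0.
Proof.
move=> Ib; case: HI => _ _ Is _ _.
have Ib' : I (- b) by rewrite -scaleN1r; apply: Is.
have h : [set p n (b + c) | c in I] (p n (b + - b)) by exists (-b).
by have := ge_inf (qsn_hlb n b) h; rewrite subrr p0.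
Qed.

Lemma le_sup' (E : set R) x : has_ubound E -> E x -> x <= sup E.
Proof. by move=> h Ex; exact: (ub_le_sup h) Ex. Qed.

Lemma tterm_ge0 n T i : 0 <= tterm p I n T i.
Proof. by rewrite /tterm mulr_ge0 // qsn_ge0. Qed.

Lemma tterm_mono n m T i : (n <= m)%N -> tterm p I n T i <= tterm p I m T i.
Proof. by move=> nm; rewrite /tterm ler_pM ?qsn_ge0 ?qsn_mono. Qed.

Lemma tsum_hub n T : tsummable p I T ->
  has_ubound [set \sum_(i < N) tterm p I n T i | N in [set: nat]].
Proof. by move=> /(_ n) [C HC]; exists C => _ [N _ <-]. Qed.

Lemma tsum_ge0 n T : tsummable p I T -> 0 <= tsum p I n T.
Proof.
move=> hT; rewrite /tsum. apply: (le_sup' (tsum_hub n hT)).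
by exists 0%N => //; rewrite big_ord0.
Qed.

Lemma tsum_mono n m T : tsummable p I T -> (n <= m)%N ->
  tsum p I n T <= tsum p I m T.
Proof.
move=> hT nm; rewrite {1}/tsum; apply: ge_sup; first by exists (\sum_(i < 0) tterm p I n T i), 0%N.
move=> _ [N _ <-]; apply: (le_trans _ (le_sup' (tsum_hub m hT) _)); last by exists N.
by apply: ler_sum => i _; apply: tterm_mono.
Qed.

Lemma rhat_mono n m S : (n <= m)%N -> rhat p I n S <= rhat p I m S.
Proof.
move=> nm; rewrite /rhat.
set Ts := [set T | tsummable p I T /\ tequiv p I T S].
have [[T0 hT0]|hne] := pselect (Ts !=set0); last first.
  have -> : Ts = set0 by apply/seteqP; split => // T hT; apply: hne; exists T.
  by rewrite !image_set0.
apply: lb_le_inf; first by exists (tsum p I m T0), T0.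
move=> _ [T hT <-]; apply: (le_trans _ (tsum_mono hT.1 nm)).
apply: ge_inf; last by exists T.
by exists 0 => _ [T' hT' <-]; apply: tsum_ge0; case: hT'.
Qed.

Lemma qsn_idealdiff n a c : I a -> qsn p I n (mul a c - a) <= 0.
Proof.
move=> Ia; apply: qsn_I; case: HI => _ Hadd Hs Hid _.
apply: Hadd; first exact: (Hid c a Ia).2.
by rewrite -scaleN1r; apply: Hs.
Qed.

End Aux.

Lemma inv_mono (R : realType) k l : (k <= l)%N -> (l.+1%:R)^-1 <= (k.+1%:R)^-1 :> R.
Proof. by move=> kl; rewrite lef_pV2 ?ler_nat ?ltnS // posrE ltr0n. Qed.

Theorem proposition2p4 (R : realType) (A : lmodType R[i])
    (mul : A -> A -> A) (p : nat -> A -> R) (I : set A)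
    (HA : frechet_algebra mul p) (HI : closed_ideal mul p I) :
  bounded_approximate_diagonal_mod mul p I <->
  exists B : set (nat -> A * A),
    tbounded p I B /\
    forall F : set A, finite_set F -> F `<=` ~` I ->
    forall (n : nat) (eps : R), 0 < eps ->
    exists M, B M /\
      (forall a, F a -> rhat p I n (tsub (lact mul a M) (ract mul M a)) < eps) /\
      (forall a, F a -> forall c, is_piQ mul p I M c ->
                   qsn p I n (mul a c - a) < eps).
Proof.
split.
  move=> [D [le [m [[[z0] refl tr dir] hB h3 h4]]]].
  exists (range m); split => //.
  move=> F /finite_seqP [s ->] FnI n eps eps0.
  pose P a al := rhat p I n (tsub (lact mul a (m al)) (ract mul (m al) a)) < eps /\
     (forall c, is_piQ mul p I (m al) c -> qsn p I n (mul a c - a) < eps).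
  have key : forall s : seq A, (forall a, a \in s -> ~ I a) ->
      exists z, forall a, a \in s -> forall al, le z al -> P a al.
    elim => [|x s' IH] hs; first by exists z0.
    have [z3 hz3] := h3 x n eps eps0.
    have [z4 hz4] := h4 x (hs x (mem_head _ _)) n eps eps0.
    have [z2 hz2] := IH (fun a ha => hs a (mem_behead (s:=x :: s') ha)).
    have [z1 [z31 z41]] := dir z3 z4.
    have [z [z1z z2z]] := dir z1 z2.
    exists z => a; rewrite in_cons => /orP[/eqP -> | ha] al hal.
      split; first by apply: hz4; apply: (tr _ _ _) z41 _; apply: (tr _ _ _) z1z _.
      by apply: hz3; apply: (tr _ _ _) z31 _; apply: (tr _ _ _) z1z _.
    by apply: hz2 => //; apply: (tr _ _ _) z2z _.
  have [z hz] := key s (fun a ha => FnI a ha).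
  exists (m z); split; first by exists z.
  by split => a ha; have [h1 h2] := hz a ha z (refl z).
move=> [B [[hBs hBC] hM]].
pose D := (seq A * nat)%type.
pose le (d1 d2 : D) := {subset d1.1 <= d2.1} /\ (d1.2 <= d2.2)%N.
pose Fd (d : D) := [set a | a \in d.1 /\ ~ I a].
have hex : forall d : D, exists M, B M /\
    (forall a, Fd d a -> rhat p I d.2 (tsub (lact mul a M) (ract mul M a)) < (d.2.+1%:R)^-1) /\
    (forall a, Fd d a -> forall c, is_piQ mul p I M c ->
                   qsn p I d.2 (mul a c - a) < (d.2.+1%:R)^-1).
  move=> d; apply: hM.
  - by apply: (sub_finite_set _ (finite_seq d.1)) => a [].
  - by move=> a [].
  - by rewrite invr_gt0 ltr0n.
have [m hm] := choice hex.
exists D, le, m; split.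
- split.
  + exact: (inhabits ([::], 0%N)).
  + by move=> x; split.
  + move=> x y z [xy1 xy2] [yz1 yz2]; split; last exact: leq_trans xy2 yz2.
    by move=> a /xy1 /yz1.
  + move=> x y; exists (x.1 ++ y.1, maxn x.2 y.2); split; split => //=;
      try (by move=> a ha; rewrite mem_cat ha ?orbT);
      by rewrite ?leq_maxl ?leq_maxr.
- split; first by move=> S [d _ <-]; apply: hBs; case: (hm d).
  move=> n; have [C hC] := hBC n; exists C => S [d _ <-]; apply: hC; exact: (hm d).1.
- move=> a n eps eps0.
  have [Ia|nIa] := pselect (I a).
    exists ([::], 0%N) => al _ c _.
    exact: le_lt_trans (qsn_idealdiff HA HI n c Ia) eps0.
  have [k hk] := ltr_add_invr eps0; rewrite add0r in hk.
  exists ([:: a], maxn n k) => al [hs hk'] c hc.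
  have Fa : Fd al a by split => //; apply: hs; rewrite mem_head.
  have := (hm al).2.2 a Fa c hc.
  have nal : (n <= al.2)%N by apply: leq_trans hk'; rewrite leq_maxl.
  have kal : (k <= al.2)%N by apply: leq_trans hk'; rewrite leq_maxr.
  move=> h; apply: le_lt_trans (qsn_mono HA HI _ nal) _.
  by apply: (lt_le_trans h); apply: le_trans (inv_mono R kal) (ltW hk).
- move=> a nIa n eps eps0.
  have [k hk] := ltr_add_invr eps0; rewrite add0r in hk.
  exists ([:: a], maxn n k) => al [hs hk'].
  have Fa : Fd al a by split => //; apply: hs; rewrite mem_head.
  have h := (hm al).2.1 a Fa.
  have nal : (n <= al.2)%N by apply: leq_trans hk'; rewrite leq_maxl.
  have kal : (k <= al.2)%N by apply: leq_trans hk'; rewrite leq_maxr.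
  apply: le_lt_trans (rhat_mono HA HI _ nal) _.
  by apply: (lt_le_trans h); apply: le_trans (inv_mono R kal) (ltW hk).
Qed.
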